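(* Let $X$ be a regular CW complex. Then for each $n\ge0$ the canonical map $\hat h_n:\coprod_{j\in J_n}\mathbb{D}^{n,m_n(j)}\to X^{(n)}$ is an induction onto a $D$-open subset of $X^{(n)}$.
   Context: An induction is an injective smooth map that is a diffeomorphism onto its image with the subset diffeology. $D$-topology: $O\subset Y$ is open iff $P^{-1}(O)$ is open for every plot $P$. Let $\ell(t)=0$ for $t\le0$, $e^{-1/t}$ for $t>0$; $\alpha_0=\int_0^1\ell(3x)\ell(3-3x)dx$; $\lambda(t)=\frac1{\alpha_0}\int_0^t\ell(3x)\ell(3-3x)dx$; $\phi(t)=\int_0^{1/2+t}\lambda(x)dx$. For integers $n,m\ge0$: $\mathbb{D}^{n,m}=\{(u,v)\in\mathbb{R}^n\times\mathbb{R}^m:\|u\|\ge1-\phi(2-\|u\|-\|v\|)\}$, $\mathbb{S}^{n-1,m}=\{(u,v):\|u\|\ge1\}$ (empty for $n=0$), with subset diffeologies. A fat CW complex is a diffeological space $X$ with subspaces $\emptyset=X^{(-1)}\subset X^{(0)}\subset\cdots$, index sets $J_n$, maps $m_n:J_n\to\mathbb{N}_0$ and smooth maps $h_n:\coprod_{j\in J_n}\mathbb{S}^{n-1,m_n(j)}\to X^{(n-1)}$ such that each $X^{(n)}$ is the pushout in diffeological spaces of the inclusion $i_n:\coprod_j\mathbb{S}^{n-1,m_n(j)}\hookrightarrow\coprod_j\mathbb{D}^{n,m_n(j)}$ and $h_n$ (with induced map $\hat h_n:\coprod_j\mathbb{D}^{n,m_n(j)}\to X^{(n)}$), and $X$ is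 the diffeological colimit of the $X^{(n)}$. It is regular (a regular CW complex) if every $h_n$ is an induction whose image is $D$-open in $X^{(n-1)}$. *)

(* Defs.v *)
From mathcomp Require Import all_boot all_order all_algebra.
From mathcomp Require Import all_classical all_reals all_analysis.
From mathcomp Require Import Rstruct Rstruct_topology.

Import Order.TTheory GRing.Theory Num.Theory.
Import numFieldNormedType.Exports.
Local Open Scope classical_set_scope.
Local Open Scope ring_scope.

Section Diffeology.
Variable R : realType.

(** Euclidean space R^n is 'rV[R]_n (its usual topology = product topology). *)
Notation E n := 'rV[R]_n.

Fixpoint iter_derive {k n : nat} (vs : seq (E k)) (f : E k -> E n) : E k -> E n :=
  match vs with
  | [::] => f
  | v :: vs' => fun x => derive (iter_derive vs' f) x v
  end.

Definition smooth_on {k n : nat} (V : set (E k)) (f : E k -> E n) : Prop :=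
  forall (vs : seq (E k)) (x : E k), V x ->
    {for x, continuous (iter_derive vs f)} /\
    forall v : E k, derivable (iter_derive vs f) x v.

(** ** Diffeologies.  A parametrization of X is a map P : U -> X defined on
    an open subset U of some R^n; here P : {x | U x} -> X.
    A candidate diffeology is the family of its plots. *)
Definition plot_set (X : Type) : Type :=
  forall (n : nat) (U : set (E n)), ({x | U x} -> X) -> Prop.

Definition is_diffeology {X : Type} (D : plot_set X) : Prop :=
  (forall n U P, D n U P -> open U) /\
  (forall n (U : set (E n)) (x : X), open U -> D n U (fun _ => x)) /\
  (forall n k (U : set (E n)) (V : set (E k)) (P : {x | U x} -> X)
          (F : E k -> E n) (hF : forall y, V y -> U (F y)),
     open V -> D n U P -> smooth_on V F ->
     D k V (fun y => P (exist _ (F (proj1_sig y)) (hF _ (proj2_sig y))))) /\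
  (forall n (U : set (E n)) (P : {x | U x} -> X), open U ->
     (forall x, U x -> exists V : set (E n), open V /\ V x /\
        exists hVU : (forall y, V y -> U y),
          D n V (fun y => P (exist _ (proj1_sig y) (hVU _ (proj2_sig y))))) ->
     D n U P).

Definition dsmooth {X Y : Type} (DX : plot_set X) (DY : plot_set Y)
  (f : X -> Y) : Prop :=
  forall n U P, DX n U P -> DY n U (fun x => f (P x)).

Definition diffeomorphism {X Y : Type} (DX : plot_set X) (DY : plot_set Y)
  (f : X -> Y) : Prop :=
  dsmooth DX DY f /\
  exists g : Y -> X, dsmooth DY DX g /\ cancel f g /\ cancel g f.

Definition sub_diffeology {Y : Type} (DY : plot_set Y) (A : set Y)
  : plot_set {y | A y} :=
  fun n U P => DY n U (fun x => proj1_sig (P x)).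

Definition corestr {X Y : Type} (f : X -> Y) : X -> {y | range f y} :=
  fun x => exist (range f) (f x) (ex_intro2 _ _ x I erefl).

Definition induction {X Y : Type} (DX : plot_set X) (DY : plot_set Y)
  (f : X -> Y) : Prop :=
  injective f /\ dsmooth DX DY f /\
  diffeomorphism DX (sub_diffeology DY (range f)) (corestr f).

Definition D_open {X : Type} (DX : plot_set X) (O : set X) : Prop :=
  forall n U P, DX n U P ->
    open [set x : E n | exists hx : U x, O (P (exist _ x hx))].

Definition euclid2_diffeology (a b : nat) : plot_set (E a * E b) :=
  fun n U P => open U /\
    exists (G1 : E n -> E a) (G2 : E n -> E b),
      smooth_on U G1 /\ smooth_on U G2 /\
      forall x : {x | U x}, P x = (G1 (proj1_sig x), G2 (proj1_sig x)).

Definition sum_diffeology {J : Type} {Xs : J -> Type}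
  (Ds : forall j, plot_set (Xs j)) : plot_set {j : J & Xs j} :=
  fun n U P => open U /\
    forall x : {x | U x}, exists V : set (E n), open V /\ V (proj1_sig x) /\
      exists (hVU : forall y, V y -> U y) (j : J) (Q : {y | V y} -> Xs j),
        Ds j n V Q /\
        forall y : {y | V y},
          P (exist _ (proj1_sig y) (hVU _ (proj2_sig y))) = existT _ j (Q y).

Definition ell (t : R) : R := if t <= 0 then 0 else expR (- t^-1).

Definition oint (f : R -> R) (a b : R) : R :=
  if a <= b then (\int[lebesgue_measure]_(x in `[a, b]) f x)%R
  else - (\int[lebesgue_measure]_(x in `[b, a]) f x)%R.

Definition bump (x : R) : R := ell (3 * x) * ell (3 - 3 * x).
Definition alpha0 : R := oint bump 0 1.
Definition lambda (t : R) : R := alpha0^-1 * oint bump 0 t.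
Definition phi (t : R) : R := oint lambda 0 (2^-1 + t).

Definition enorm {n : nat} (u : E n) : R := Num.sqrt (\sum_(i < n) u ord0 i ^+ 2).

Definition fat_disk (n m : nat) : set (E n * E m) :=
  [set p : E n * E m | 1 - phi (2 - enorm p.1 - enorm p.2) <= enorm p.1].
Definition fat_sphere (n m : nat) : set (E n * E m) :=
  [set p : E n * E m | 1 <= enorm p.1].

Definition cells_D (n : nat) {J : Type} (m : J -> nat) : Type :=
  {j : J & {p : E n * E (m j) | fat_disk n (m j) p}}.
Definition cells_S (n : nat) {J : Type} (m : J -> nat) : Type :=
  {j : J & {p : E n * E (m j) | fat_sphere n (m j) p}}.

Definition cells_D_diffeology n {J} (m : J -> nat) : plot_set (cells_D n m) :=
  sum_diffeology (fun j => sub_diffeology (@euclid2_diffeology n (m j))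
                                          (fat_disk n (m j))).
Definition cells_S_diffeology n {J} (m : J -> nat) : plot_set (cells_S n m) :=
  sum_diffeology (fun j => sub_diffeology (@euclid2_diffeology n (m j))
                                          (fat_sphere n (m j))).

(* The square  A --h--> C
               |i       |k
               B --g--> P   is a pushout. *)
Definition is_pushout {A B C P : Type}
  (DA : plot_set A) (DB : plot_set B) (DC : plot_set C) (DP : plot_set P)
  (i : A -> B -> Prop) (* graph of the map i : A -> B *)
  (h : A -> C) (k : C -> P) (g : B -> P) : Prop :=
  dsmooth DC DP k /\ dsmooth DB DP g /\
  (forall a b, i a b -> k (h a) = g b) /\
  forall (Z : Type) (DZ : plot_set Z), is_diffeology DZ ->
  forall (f1 : C -> Z) (f2 : B -> Z),
    dsmooth DC DZ f1 -> dsmooth DB DZ f2 ->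
    (forall a b, i a b -> f1 (h a) = f2 b) ->
    exists u : P -> Z, dsmooth DP DZ u /\
      (forall c, u (k c) = f1 c) /\ (forall b, u (g b) = f2 b) /\
      forall u' : P -> Z, dsmooth DP DZ u' ->
        (forall c, u' (k c) = f1 c) -> (forall b, u' (g b) = f2 b) ->
        forall p, u' p = u p.

(* The inclusion  i_n : coprod S^{n-1,m_n(j)} -> coprod D^{n,m_n(j)}, given
   by its graph (the identity on underlying points of each summand). *)
Definition incl_SD n {J} (m : J -> nat) (a : cells_S n m) (b : cells_D n m) : Prop :=
  exists (j : J) (p : E n * E (m j)) (hS : fat_sphere n (m j) p)
         (hD : fat_disk n (m j) p),
    a = existT _ j (exist _ p hS) /\ b = existT _ j (exist _ p hD).

Section FatCW.
Variables (X : Type) (DX : plot_set X).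
(* skel n = X^{(n)};  prevskel n = X^{(n-1)}, with X^{(-1)} = empty *)
Variable skel : nat -> set X.
Definition prevskel (n : nat) : set X :=
  match n with 0 => set0 | n'.+1 => skel n' end.
Variable skel_sub : forall n x, skel n x -> skel n.+1 x.

Lemma prevskel_sub n x : prevskel n x -> skel n x.
Proof. by case: n => [[]|n] /=; apply: skel_sub. Qed.

Definition skel_incl (n : nat) : {x | prevskel n x} -> {x | skel n x} :=
  fun y => exist _ (proj1_sig y) (prevskel_sub n _ (proj2_sig y)).

Definition skel_diffeology (n : nat) := sub_diffeology DX (skel n).
Definition prevskel_diffeology (n : nat) := sub_diffeology DX (prevskel n).

Variables (J : nat -> Type) (m : forall n, J n -> nat).
Variable h : forall n, cells_S n (m n) -> {x | prevskel n x}.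
Variable hhat : forall n, cells_D n (m n) -> {x | skel n x}.

Definition is_seq_colimit : Prop :=
  forall (Z : Type) (DZ : plot_set Z), is_diffeology DZ ->
  forall g : forall n, {x | skel n x} -> Z,
    (forall n, dsmooth (skel_diffeology n) DZ (g n)) ->
    (forall n (x : X) (hx : skel n x),
        g n.+1 (exist _ x (skel_sub n x hx)) = g n (exist _ x hx)) ->
    exists u : X -> Z, dsmooth DX DZ u /\
      (forall n y, u (proj1_sig y) = g n y) /\
      forall u' : X -> Z, dsmooth DX DZ u' ->
        (forall n y, u' (proj1_sig y) = g n y) -> forall x, u' x = u x.

Definition is_fat_CW : Prop :=
  is_diffeology DX /\
  (forall n, dsmooth (cells_S_diffeology n (m n)) (prevskel_diffeology n) (h n)) /\
  (forall n, is_pushout (cells_S_diffeology n (m n)) (cells_D_diffeology n (m n))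
                        (prevskel_diffeology n) (skel_diffeology n)
                        (@incl_SD n (J n) (m n)) (h n) (skel_incl n) (hhat n)) /\
  is_seq_colimit.

Definition is_regular_CW : Prop :=
  is_fat_CW /\
  forall n, induction (cells_S_diffeology n (m n)) (prevskel_diffeology n) (h n) /\
            D_open (prevskel_diffeology n) (range (h n)).

End FatCW.

End Diffeology.

(* Main.v *)
Require Import Defs.
From mathcomp Require Import all_boot all_order all_algebra.
From mathcomp Require Import all_classical all_reals all_analysis.
From mathcomp Require Import Rstruct Rstruct_topology.
From mathcomp Require Import ring lra.
From HB Require Import structures.
Local Open Scope classical_set_scope.

Module Prop72Helpers.
Import Order.TTheory GRing.Theory Num.Theory.
Import numFieldNormedType.Exports.
Local Open Scope classical_set_scope.
Local Open Scope ring_scope.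

Section Phi.
Variable R : realType.

Lemma Rint0 (a b : R) (f : R -> R) :
  (forall x, a <= x <= b -> f x = 0) ->
  (\int[lebesgue_measure]_(x in `[a, b]) f x)%R = 0.
Proof.
move=> H; rewrite (@eq_Rintegral _ _ _ _ _ (cst 0)); last first.
  by move=> x; rewrite inE /= in_itv /= => /H.
by rewrite /Rintegral integral0.
Qed.

Lemma ell_ge0 (t : R) : 0 <= ell R t.
Proof. by rewrite /ell; case: ifP => // _; exact: expR_ge0. Qed.

Lemma ell_le0 (t : R) : t <= 0 -> ell R t = 0.
Proof. by rewrite /ell => ->. Qed.

Lemma bump_ge0 (t : R) : 0 <= Defs.bump R t.
Proof. by rewrite /Defs.bump mulr_ge0 // ell_ge0. Qed.

Lemma bump_le0 (t : R) : t <= 0 -> Defs.bump R t = 0.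
Proof.
move=> t0; rewrite /Defs.bump ell_le0 ?mul0r //.
by rewrite pmulr_rle0 // ltr0n.
Qed.

Lemma alpha0_ge0 : 0 <= alpha0 R.
Proof.
rewrite /alpha0 /oint ler01; apply: Rintegral_ge0 => x _; exact: bump_ge0.
Qed.

Lemma lambda_ge0 x : 0 <= x -> 0 <= lambda R x.
Proof.
move=> x0; rewrite /lambda mulr_ge0 ?invr_ge0 ?alpha0_ge0 //.
rewrite /oint x0; apply: Rintegral_ge0 => y _; exact: bump_ge0.
Qed.

Lemma lambda_le0 x : x <= 0 -> lambda R x = 0.
Proof.
move=> x0; rewrite /lambda /oint; case: ifP => _.
  by rewrite Rint0 ?mulr0 // => y /andP[_ y0]; apply: bump_le0; exact: le_trans y0 x0.
by rewrite Rint0 ?oppr0 ?mulr0 // => y /andP[_ y0]; apply: bump_le0.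
Qed.

Lemma phi_ge0 t : 0 <= phi R t.
Proof.
rewrite /phi /oint; case: ifP => s0.
  by apply: Rintegral_ge0 => y; rewrite /= in_itv /= => /andP[y0 _]; exact: lambda_ge0.
rewrite Rint0 ?oppr0 // => y /andP[_ y0]; exact: lambda_le0.
Qed.
End Phi.

Section Smooth.
Variable R : realType.
Local Notation E n := 'rV[R]_n.

Fixpoint iterD {V W : normedModType R} (vs : seq V) (f : V -> W) : V -> W :=
  match vs with
  | [::] => f
  | v :: vs' => fun x => 'D_v (iterD vs' f) x
  end.

Lemma iterD_E k n vs (f : E k -> E n) : iter_derive R vs f = iterD vs f.
Proof. by elim: vs => //= v vs ->. Qed.

Definition Sm {V W : normedModType R} N (U : set V) (f : V -> W) :=
  forall vs, (size vs <= N)%N -> forall x, U x ->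
    {for x, continuous (iterD vs f)} /\ forall v, derivable (iterD vs f) x v.

Lemma smooth_onE k n (U : set (E k)) (f : E k -> E n) :
  smooth_on R U f <-> forall N, Sm N U f.
Proof.
split=> [sf N vs _ x Ux|sf vs x Ux]; first by rewrite -iterD_E; exact: sf.
by rewrite iterD_E; exact: (sf (size vs) vs (leqnn _)).
Qed.

Section Gen.
Context {V W : normedModType R}.

Lemma iterD_rcons vs v (f : V -> W) :
  iterD (rcons vs v) f = iterD vs (fun x => 'D_v f x).
Proof. by elim: vs => //= a vs ->. Qed.

Lemma SmS N (U : set V) (f : V -> W) :
  Sm N.+1 U f <-> Sm 0 U f /\ forall v, Sm N U (fun x => 'D_v f x).
Proof.
split=> [sf|[s0 sD]].
  split; first by move=> vs vs0; apply: sf; exact: leq_trans vs0 _.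
  by move=> v vs svs; rewrite -iterD_rcons; apply: sf; rewrite size_rcons ltnS.
move=> vs; case/lastP: vs => [|vs v] svs; first exact: s0.
by rewrite iterD_rcons; apply: sD; rewrite size_rcons ltnS in svs.
Qed.

Lemma Sm_le N M (U : set V) (f : V -> W) : (M <= N)%N -> Sm N U f -> Sm M U f.
Proof. by move=> MN sf vs svs; apply: sf; exact: leq_trans svs MN. Qed.

Lemma near_iterD (U : set V) (f g : V -> W) : open U ->
  (forall x, U x -> f x = g x) ->
  forall vs x, U x -> \forall y \near x, iterD vs f y = iterD vs g y.
Proof.
move=> oU fg; elim=> [|v vs IH] x Ux /=.
  have nU : nbhs x U by move: oU; rewrite openE => /(_ x Ux).
  by apply: filterS nU => y; exact: fg.
have nU : nbhs x U by move: oU; rewrite openE => /(_ x Ux).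
apply: filterS nU => y Uy; exact: near_eq_derive (IH y Uy).
Qed.
Arguments near_iterD {U f g}.

Lemma cont_near (f g : V -> W) x :
  (\forall y \near x, f y = g y) -> {for x, continuous f} -> {for x, continuous g}.
Proof.
move=> fg cf; have e : f x = g x by exact: (nbhs_singleton fg).
have h1 : g @ x --> f x.
  apply: cvg_trans cf; exact: near_eq_cvg.
by move: h1; rewrite e.
Qed.

Lemma Sm_eq N (U : set V) (f g : V -> W) : open U ->
  (forall x, U x -> f x = g x) -> Sm N U f -> Sm N U g.
Proof.
move=> oU fg sf vs svs x Ux; have [cf df] := sf vs svs x Ux.
have nfg := near_iterD oU fg vs x Ux.
split; first exact: cont_near nfg cf.
move=> v; apply: near_eq_derivable (df v).
by apply: filterS nfg => y ->.
Qed.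

Lemma Sm_cst N (U : set V) (c : W) : Sm N U (fun _ => c).
Proof.
have e : forall vs, iterD vs (fun _ : V => c) = fun _ => if vs is [::] then c else 0.
  elim=> //= v vs ->; apply: funext => x.
  by case: vs => [|? ?]; rewrite (derive_cst _ x v) ?derive_cst.
move=> vs _ x _; rewrite e; split; first exact: cst_continuous.
by move=> v; exact: derivable_cst.
Qed.

Lemma Sm0_add (U : set V) (f g : V -> W) :
  Sm 0 U f -> Sm 0 U g -> Sm 0 U (f \+ g).
Proof.
move=> sf sg vs; rewrite leqn0 => /nilP -> x Ux /=.
have [cf df] := sf [::] (leqnn _) x Ux; have [cg dg] := sg [::] (leqnn _) x Ux.
split; first exact: continuousD.
by move=> v; apply: derivableD; [exact: df|exact: dg].
Qed.

Lemma Sm_add N (U : set V) (f g : V -> W) : open U ->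
  Sm N U f -> Sm N U g -> Sm N U (f \+ g).
Proof.
move=> oU; elim: N f g => [|N IH] f g sf sg; first exact: Sm0_add.
move: sf sg => /SmS[sf0 sfD] /SmS[sg0 sgD]; apply/SmS; split.
  exact: Sm0_add.
move=> v; apply: (@Sm_eq N U (fun x => 'D_v f x + 'D_v g x)) => //.
  move=> x Ux; rewrite deriveD //.
    by have [_ H] := sf0 [::] (leqnn _) x Ux; exact: H.
  by have [_ H] := sg0 [::] (leqnn _) x Ux; exact: H.
exact: (IH (fun x => 'D_v f x) (fun x => 'D_v g x)).
Qed.

Lemma Sm_sum N (U : set V) p (fs : 'I_p -> V -> W) : open U ->
  (forall i, Sm N U (fs i)) -> Sm N U (fun x => \sum_(i < p) fs i x).
Proof.
move=> oU; elim: p fs => [|p IH] fs sfs.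
  apply: (@Sm_eq N U (fun _ => 0)) => //; last exact: Sm_cst.
  by move=> x _; rewrite big_ord0.
apply: (@Sm_eq N U ((fun x => \sum_(i < p) fs (widen_ord (leqnSn p) i) x) \+
   fs ord_max)) => //.
  by move=> x _; rewrite big_ord_recr.
apply: Sm_add => //.
all: try exact: sfs.
exact: (IH (fun i => fs (widen_ord (leqnSn p) i))).
Qed.

End Gen.

Section Mx.
Context {V : normedModType R} {p q : nat}.

Lemma Sm0_coord (U : set V) (f : V -> 'M[R]_(p, q)) i j :
  Sm 0 U f -> Sm 0 U (fun x => f x i j).
Proof.
move=> sf vs; rewrite leqn0 => /nilP -> x Ux /=.
have [cf df] := sf [::] (leqnn _) x Ux.
split; first exact: (continuous_comp cf (@coord_continuous R _ _ i j _)).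
by move=> v; move/derivable_mxP: (df v) => /(_ i j).
Qed.

Lemma Sm_coord N (U : set V) (f : V -> 'M[R]_(p, q)) i j : open U ->
  Sm N U f -> Sm N U (fun x => f x i j).
Proof.
move=> oU; elim: N f => [|N IH] f sf; first exact: Sm0_coord.
move/SmS: sf => [sf0 sfD]; apply/SmS; split; first exact: Sm0_coord.
move=> v; apply: (@Sm_eq _ _ N U (fun x => 'D_v f x i j)) => //; last first.
  exact: (IH (fun x => 'D_v f x)).
move=> x Ux; have [_ df] := sf0 [::] (leqnn _) x Ux.
by rewrite (derive_mx (df v)) mxE.
Qed.

Lemma deriveZf (c : V -> R) (f : V -> 'M[R]_(p, q)) x v :
  derivable c x v -> derivable f x v ->
  derivable (fun y => c y *: f y) x v /\
  'D_v (fun y => c y *: f y) x = 'D_v c x *: f x + c x *: 'D_v f x.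
Proof.
move=> dc df.
have e : forall i j, (fun y => (c y *: f y) i j) = c * (fun y => f y i j).
  by move=> i j; apply: funext => y; rewrite mxE.
have dfij : forall i j, derivable (fun y => f y i j) x v by apply/derivable_mxP.
have dcf : derivable (fun y => c y *: f y) x v.
  by apply/derivable_mxP => i j; rewrite e; exact: derivableM.
split=> //; rewrite (derive_mx dcf); apply/matrixP => i j.
rewrite !mxE e deriveM // (derive_mx df) !mxE.
by rewrite addrC /GRing.scale /= mulrC [_ * f x i j]mulrC.
Qed.

Lemma Sm0_scale (U : set V) (c : V -> R) (f : V -> 'M[R]_(p, q)) :
  Sm 0 U c -> Sm 0 U f -> Sm 0 U (fun x => c x *: f x).
Proof.
move=> sc sf vs; rewrite leqn0 => /nilP -> x Ux /=.
have [cc dc] := sc [::] (leqnn _) x Ux; have [cf df] := sf [::] (leqnn _) x Ux.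
split; first exact: continuousZ.
by move=> v; have [] := @deriveZf _ _ _ _ (dc v) (df v).
Qed.

Lemma Sm_scale N (U : set V) (c : V -> R) (f : V -> 'M[R]_(p, q)) : open U ->
  Sm N U c -> Sm N U f -> Sm N U (fun x => c x *: f x).
Proof.
move=> oU; elim: N c f => [|N IH] c f sc sf; first exact: Sm0_scale.
move: (sc) (sf) => /SmS[sc0 scD] /SmS[sf0 sfD]; apply/SmS; split.
  exact: Sm0_scale.
move=> v; apply: (@Sm_eq _ _ N U ((fun x => 'D_v c x *: f x) \+
  (fun x => c x *: 'D_v f x))) => //.
  move=> x Ux; have [_ dc] := sc0 [::] (leqnn _) x Ux.
  have [_ df] := sf0 [::] (leqnn _) x Ux.
  by have [_ ->] := @deriveZf _ _ _ _ (dc v) (df v).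
apply: Sm_add => //.
  by apply: IH; [exact: scD|exact: Sm_le sf].
by apply: IH; [exact: Sm_le sc|exact: sfD].
Qed.

End Mx.
End Smooth.

Section Frechet.
Variable R : realType.

Lemma mx_entry_le m n (M : 'M[R]_(m, n)) i j : `|M i j| <= `|M|.
Proof.
rewrite [leRHS]/Num.Def.normr /= mx_normrE.
exact: (le_bigmax _ (fun ij => `|M ij.1 ij.2|) (i, j)).
Qed.

Lemma mx_norm_le m n (M : 'M[R]_(m, n)) K : 0 <= K ->
  (forall i j, `|M i j| <= K) -> `|M| <= K.
Proof.
move=> K0 H; rewrite [leLHS]/Num.Def.normr /= mx_normrE.
by apply: bigmax_le => // -[i j] _; exact: H.
Qed.

Lemma line_derive {V W : normedModType R} (G : V -> W) p e t :
  derivable G (p + t *: e) e ->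
  derivable (fun s : R => G (p + s *: e)) t 1 /\
  'D_1 (fun s : R => G (p + s *: e)) t = 'D_e G (p + t *: e).
Proof.
have E : (fun h : R => h^-1 *: (((fun s : R => G (p + s *: e)) \o shift t) (h *: 1)
           - G (p + t *: e))) =
         (fun h : R => h^-1 *: ((G \o shift (p + t *: e)) (h *: e) - G (p + t *: e))).
  apply: funext => h /=; congr (_ *: (G _ - _)).
  by rewrite [h *: 1]mulr1 scalerDl addrCA addrA.
by rewrite /derivable /derive E.
Qed.

Lemma mvt_bound (psi : R -> R) (a c K : R) :
  (forall s, `|s| <= `|a| -> derivable psi s 1 /\ `|'D_1 psi s - c| <= K) ->
  `|psi a - psi 0 - a * c| <= `|a| * K.
Proof.
move=> H.
have K0 : 0 <= K.
  have := H 0; rewrite normr0 normr_ge0 => /(_ isT) [_ h0].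
  exact: le_trans (normr_ge0 _) h0.
have [a0|a0|->] := ltgtP a 0; last by rewrite subrr mul0r subr0 normr0 mul0r.
- have dI : forall x, x \in `[a, 0] -> derivable psi x 1.
    move=> x; rewrite in_itv /= => /andP[ax x0].
    apply: (proj1 (H x _)); rewrite ler0_norm // ler0_norm ?(ltW a0) //.
    by rewrite lerN2.
  have [x] := MVT a0 (fun x xI => derivableP (dI x (subset_itv_oo_cc xI)))
    (derivable_within_continuous dI).
  rewrite in_itv /= => /andP[ax x0] E.
  have [_ Hx] : derivable psi x 1 /\ `|'D_1 psi x - c| <= K.
    apply: H; rewrite ler0_norm ?(ltW x0) // ler0_norm ?(ltW a0) //.
    by rewrite lerN2 ltW.
  have E' : psi a - psi 0 = a * 'D_1 psi x.
    by rewrite -opprB E sub0r mulrN opprK mulrC.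
  by rewrite E' -mulrBr normrM ler_wpM2l.
- have dI : forall x, x \in `[0, a] -> derivable psi x 1.
    move=> x; rewrite in_itv /= => /andP[x0 xa].
    by apply: (proj1 (H x _)); rewrite ger0_norm // ger0_norm ?(ltW a0).
  have [x] := MVT a0 (fun x xI => derivableP (dI x (subset_itv_oo_cc xI)))
    (derivable_within_continuous dI).
  rewrite in_itv /= => /andP[x0 xa] E.
  have [_ Hx] : derivable psi x 1 /\ `|'D_1 psi x - c| <= K.
    by apply: H; rewrite ger0_norm ?(ltW x0) // ger0_norm ?(ltW a0) // ltW.
  by rewrite E subr0 mulrC -mulrBr normrM ler_wpM2l.
Qed.
End Frechet.
Arguments line_derive {R V W G p e t}.
Arguments mx_entry_le {R m n}.
Arguments mx_norm_le {R m n}.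

Section Frechet2.
Variable R : realType.

Lemma continuous_sumf {T : topologicalType} {W : normedModType R} p
  (fs : 'I_p -> T -> W) x : (forall i, {for x, continuous (fs i)}) ->
  {for x, continuous (fun z => \sum_(i < p) fs i z)}.
Proof.
elim: p fs => [|p IH] fs H.
  have -> : (fun z => \sum_(i < 0) fs i z) = fun _ => 0.
    by apply: funext => z; rewrite big_ord0.
  exact: cst_continuous.
have -> : (fun z => \sum_(i < p.+1) fs i z) =
  (fun z => \sum_(i < p) fs (widen_ord (leqnSn p) i) z) \+ fs ord_max.
  by apply: funext => z; rewrite big_ord_recr.
apply: continuousD; last exact: H.
exact: (IH (fun i => fs (widen_ord (leqnSn p) i))).
Qed.

Lemma coordM_continuous n (c : R) i (x : 'rV[R]_n) :
  {for x, continuous (fun z : 'rV[R]_n => z 0 i * c)}.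
Proof.
apply: continuousM; last exact: cst_continuous.
exact: coord_continuous.
Qed.
End Frechet2.

Section Frechet3.
Variable R : realType.
Variable n : nat.
Local Notation V := 'rV[R]_n.
Definition ee (i : 'I_n) : V := delta_mx 0 i.
Definition qv (k : nat) (d : V) : V := \row_j (if (j < k)%N then d 0 j else 0).

Lemma qv0 d : qv 0 d = 0.
Proof. by apply/matrixP => a j; rewrite !mxE. Qed.

Lemma qvn d : qv n d = d.
Proof. by apply/matrixP => a j; rewrite !mxE ltn_ord (ord1 a). Qed.

Lemma qvS (i : 'I_n) d : qv i.+1 d = qv i d + d 0 i *: ee i.
Proof.
apply/matrixP => a j; rewrite !mxE (ord1 a) eqxx /= ltnS leq_eqVlt.
have -> : (j == i) = (j == i :> nat) by [].
case: (ltngtP j i) => [ji|ij|/val_inj ->].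
- by rewrite orbT mulr0 addr0.
- by rewrite mulr0 addr0.
- by rewrite mulr1 add0r.
Qed.

Lemma qv_pt_norm (i : 'I_n) (d : V) (s : R) : `|s| <= `|d 0 i| ->
  `|qv i d + s *: ee i| <= `|d|.
Proof.
move=> sd; apply: mx_norm_le => // a j; rewrite !mxE (ord1 a) eqxx /=.
have [/val_inj ->|ji] := eqVneq (val j) (val i).
  by rewrite ltnn eqxx mulr1 add0r (le_trans sd) // mx_entry_le.
have -> : (j == i) = false by apply/negbTE; apply: contraNneq ji => ->.
rewrite mulr0 addr0; case: ifP => _; last by rewrite normr0.
exact: mx_entry_le.
Qed.

End Frechet3.
Arguments ee {R n}.
Arguments qv {R n}.
Arguments qv0 {R n}.
Arguments qvn {R n}.
Arguments qvS {R n}.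
Arguments qv_pt_norm {R n i d s}.

Section Frechet4.
Variable R : realType.
Variable n : nat.
Local Notation V := 'rV[R]_n.
Variables (G : V -> R) (U : set V) (y : V).
Hypotheses (oU : open U) (Uy : U y)
  (dG : forall z i, U z -> derivable G z (ee i))
  (cD : forall i, {for y, continuous (fun z => 'D_(ee i) G z)}).

Definition Lf (d : V) := \sum_(i < n) d 0 i * 'D_(ee i) G y.

Lemma frechet_est eps : 0 < eps ->
  \forall d \near (0 : V), `|G (d + y) - G y - Lf d| <= eps * `|d|.
Proof.
move=> e0.
pose e' := eps / n.+1%:R.
have e'0 : 0 < e' by rewrite divr_gt0 // ltr0n.
have N1 : \forall z \near y, forall i, `|'D_(ee i) G y - 'D_(ee i) G z| <= e'.
  apply: (@filter_forall _ _ (fun i z => `|'D_(ee i) G y - 'D_(ee i) G z| <= e') _ (nbhs_filter y)) => i.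
  by move/cvgrPdist_le : (cD i) => /(_ e' e'0).
have nU : nbhs y U by move: oU; rewrite openE => /(_ y Uy).
have [δ δ0 Hδ] := (nbhs_ballP _ _).1 (filterI nU N1).
apply/nbhs_ballP; exists δ => // d; rewrite -ball_normE /= sub0r normrN => dδ.
have Hpt : forall (i : 'I_n) s, `|s| <= `|d 0 i| ->
    U (y + qv i d + s *: ee i) /\
    `|'D_(ee i) G y - 'D_(ee i) G (y + qv i d + s *: ee i)| <= e'.
  move=> i s sd.
  have [|Uz H] := Hδ (y + qv i d + s *: ee i).
    rewrite -ball_normE /= -addrA opprD addrA subrr add0r normrN.
    exact: le_lt_trans (qv_pt_norm sd) dδ.
  by split=> //; exact: H.
have Hterm : forall i : 'I_n,
    `|G (y + qv i.+1 d) - G (y + qv i d) - d 0 i * 'D_(ee i) G y| <= `|d 0 i| * e'.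
  move=> i; rewrite qvS addrA.
  have := @mvt_bound R (fun s => G (y + qv i d + s *: ee i)) (d 0 i) ('D_(ee i) G y) e'.
  rewrite /= scale0r addr0; apply => s sd.
  have [Uz Hz] := Hpt i s sd.
  have [dl ->] := line_derive (dG _ i Uz).
  by split=> //; rewrite distrC.
have Hsum : G (d + y) - G y - Lf d =
    \sum_(i < n) (G (y + qv i.+1 d) - G (y + qv i d) - d 0 i * 'D_(ee i) G y).
  rewrite sumrB /Lf; congr (_ - _).
  rewrite -(big_mkord xpredT (fun i => G (y + qv i.+1 d) - G (y + qv i d))).
  by rewrite telescope_sumr // qvn qv0 addr0 [d + y]addrC.
rewrite Hsum; apply: le_trans (ler_norm_sum _ _ _) _.
apply: le_trans (ler_sum _ (fun i _ => Hterm i)) _.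
apply: (@le_trans _ _ (\sum_(i < n) `|d| * e')).
  apply: ler_sum => i _; apply: ler_wpM2r; [exact: ltW|exact: mx_entry_le].
rewrite sumr_const card_ord -mulr_natl.
have -> : n%:R * (`|d| * e') = (eps * `|d|) * (n%:R / n.+1%:R).
  by rewrite /e'; move: (n%:R) (n.+1%:R) (`|d|) => a b c; ring.
rewrite ler_piMr // ?mulr_ge0 ?(ltW e0) //.
by rewrite ler_pdivrMr ?ltr0n // mul1r ler_nat.
Qed.

Lemma Lf_linear : linear Lf.
Proof.
move=> a u v; rewrite /Lf scaler_sumr -big_split /=; apply: eq_bigr => i _.
by rewrite !mxE mulrDl -mulrA.
Qed.

Lemma frechetR : differentiable G y.
Proof.
pose LM := GRing.isLinear.Build _ _ _ _ Lf Lf_linear.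
pose LL : {linear V -> R} := HB.pack Lf LM.
have cL : continuous LL.
  have -> : (LL : V -> R) = Lf by [].
  move=> x; apply: (@continuous_sumf R _ _ n (fun i (z : V) => z 0 i * 'D_(ee i) G y) x) => i; exact: coordM_continuous.
have eqo : G \o shift y = cst (G y) + LL +o_ (0 : V) id.
  apply/eqaddoP => eps e0.
  have H := frechet_est eps e0; near=> d.
  rewrite /= opprD addrA; near: d; exact: H.
apply/diff_locallyP; rewrite (diff_unique cL eqo); split => //.
Unshelve. all: by end_near.
Qed.

End Frechet4.

Section Frechet5.
Variable R : realType.

Lemma cont_near' {V W : normedModType R} (f g : V -> W) x :
  (\forall y \near x, f y = g y) -> {for x, continuous f} -> {for x, continuous g}.
Proof.
move=> fg cf; have e : f x = g x by exact: (nbhs_singleton fg).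
have h1 : g @ x --> f x.
  apply: cvg_trans cf; exact: near_eq_cvg.
by move: h1; rewrite e.
Qed.

Lemma frechetV n a (G : 'rV[R]_n -> 'rV[R]_a) (U : set 'rV[R]_n) y :
  open U -> U y -> (forall z i, U z -> derivable G z (ee i)) ->
  (forall i, {for y, continuous (fun z => 'D_(ee i) G z)}) ->
  differentiable G y.
Proof.
move=> oU Uy dG cD.
have nU : nbhs y U by move: oU; rewrite openE => /(_ y Uy).
have Gj : forall j, differentiable (fun z => G z 0 j) y.
  move=> j; apply: (@frechetR R n _ U y oU Uy).
    by move=> z i Uz; move/derivable_mxP: (dG z i Uz) => /(_ 0 j).
  move=> i; apply: (@cont_near' _ _ (fun z => 'D_(ee i) G z 0 j)).
    apply: filterS nU => z Uz.
    by rewrite (derive_mx (dG z i Uz)) mxE.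
  exact: (continuous_comp (cD i) (@coord_continuous R _ _ 0 j _)).
have -> : G = \sum_(j < a) (fun z => G z 0 j *: ee j).
  by rewrite fct_sumE; apply: funext => z; rewrite [LHS]row_sum_delta.
apply: differentiable_sum => j; apply: differentiableZl; exact: Gj.
Qed.
End Frechet5.

Section Comp.
Variable R : realType.

Lemma derive1P' {V W : normedModType R} (f : V -> W) x v :
  'D_v f x = 'D_1 (fun h : R => f (h *: v + x)) 0.
Proof.
rewrite /derive; set g1 := fun h => h^-1 *: _; set g2 := fun h => h^-1 *: _.
suff -> : g1 = g2 by [].
by rewrite funeqE /g1 /g2 => h /=; rewrite addr0 scale0r add0r [_%:A]mulr1.
Qed.

Lemma chain k n a (F : 'rV[R]_k -> 'rV[R]_n) (G : 'rV[R]_n -> 'rV[R]_a) x v :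
  derivable F x v -> differentiable G (F x) ->
  derivable (G \o F) x v /\ 'D_v (G \o F) x = 'd G (F x) ('D_v F x).
Proof.
move=> dF dG.
pose phi := fun h : R => F (h *: v + x).
have dphi : differentiable phi 0 by apply/derivable1_diffP; exact: ((derivable1P F x v).1 dF).
have phi0 : phi 0 = F x by rewrite /phi scale0r add0r.
have dG' : differentiable G (phi 0) by rewrite phi0.
have dGphi : differentiable (G \o phi) 0 by exact: differentiable_comp.
split; first by apply/derivable1P/derivable1_diffP.
have e1 : 'D_v (G \o F) x = 'D_1 (G \o phi) 0 := derive1P' _ _ _.
have e2 : 'D_v F x = 'D_1 phi 0 := derive1P' _ _ _.
rewrite e1 e2 (deriveE (1 : R) dGphi) (diff_comp dphi dG') /= phi0.
by rewrite -(deriveE (1 : R) dphi).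
Qed.

Lemma diff_coords n a (G : 'rV[R]_n -> 'rV[R]_a) y w :
  differentiable G y -> 'd G y w = \sum_(i < n) w 0 i *: 'D_(ee i) G y.
Proof.
move=> dG; rewrite [in LHS](row_sum_delta w) linear_sum.
by apply: eq_bigr => i _; rewrite linearZ /= -deriveE.
Qed.

Lemma smooth_diff n a (U : set 'rV[R]_n) (G : 'rV[R]_n -> 'rV[R]_a) y :
  open U -> (forall M, Sm R M U G) -> U y -> differentiable G y.
Proof.
move=> oU sG Uy; apply: (@frechetV R n a G U y oU Uy).
  by move=> z i Uz; have [_ H] := sG 0%N [::] (leqnn _) z Uz; exact: H.
by move=> i; have [H _] := sG 1%N [:: ee i] (leqnn _) y Uy; exact: H.
Qed.

Section SmComp.
Variables (k n a : nat) (V' : set 'rV[R]_k) (U : set 'rV[R]_n)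
  (F : 'rV[R]_k -> 'rV[R]_n).
Hypotheses (oU : open U) (oV : open V') (hF : forall x, V' x -> U (F x))
  (sF : forall N, Sm R N V' F).

Lemma Sm0_comp (G : 'rV[R]_n -> 'rV[R]_a) :
  (forall M, Sm R M U G) -> Sm R 0 V' (G \o F).
Proof.
move=> sG vs; rewrite leqn0 => /nilP -> x Vx /=.
have [cF dF] := sF 0%N [::] (leqnn _) x Vx.
have [cG dGz] := sG 0%N [::] (leqnn _) (F x) (hF x Vx).
split; first exact: continuous_comp cF cG.
have dG := @smooth_diff n a U G (F x) oU sG (hF x Vx).
by move=> v; have [] := @chain k n a F G x v (dF v) dG.
Qed.

Lemma comp_formula (G : 'rV[R]_n -> 'rV[R]_a) x v :
  (forall M, Sm R M U G) -> V' x ->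
  'D_v (G \o F) x = \sum_(i < n) ('D_v F x) 0 i *: 'D_(ee i) G (F x).
Proof.
move=> sG Vx; have dG := @smooth_diff n a U G (F x) oU sG (hF x Vx).
have [_ dF] := sF 0%N [::] (leqnn _) x Vx.
have [_ ->] := @chain k n a F G x v (dF v) dG.
exact: diff_coords.
Qed.

Lemma Sm_comp N : forall G : 'rV[R]_n -> 'rV[R]_a,
  (forall M, Sm R M U G) -> Sm R N V' (G \o F).
Proof.
elim: N => [|N IH] G sG; first exact: Sm0_comp.
apply/SmS; split; first exact: Sm0_comp.
move=> v.
apply: (@Sm_eq R _ _ N V'
  (fun x => \sum_(i < n) (fun x => ('D_v F x) 0 i *: ('D_(ee i) G \o F) x) x)) => //.
  by move=> x Vx; rewrite comp_formula.
apply: Sm_sum => // i.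
apply: Sm_scale => //.
  apply: (@Sm_coord R _ 1%N n N V' (fun x => 'D_v F x)) => //.
  by have /SmS[_ H] := sF N.+1; exact: H.
apply: IH => M.
by have /SmS[_ H] := sG M.+1; exact: H.
Qed.

End SmComp.

Lemma smooth_on_comp' k n a (V : set 'rV[R]_k) (U : set 'rV[R]_n)
  (F : 'rV[R]_k -> 'rV[R]_n) (G : 'rV[R]_n -> 'rV[R]_a) :
  open U -> open V -> (forall y, V y -> U (F y)) ->
  smooth_on R V F -> smooth_on R U G -> smooth_on R V (G \o F).
Proof.
move=> oU oV hF /smooth_onE sF /smooth_onE sG; apply/smooth_onE => N.
exact: (@Sm_comp k n a V U F oU oV hF sF N G sG).
Qed.

Lemma smooth_on_cst' k a (U : set 'rV[R]_k) (c : 'rV[R]_a) :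
  smooth_on R U (fun _ => c).
Proof. by apply/smooth_onE => N; exact: Sm_cst. Qed.

Lemma smooth_on_id' k (U : set 'rV[R]_k) : smooth_on R U id.
Proof.
apply/smooth_onE; case=> [|N].
  move=> vs; rewrite leqn0 => /nilP -> x _ /=.
  by split; [exact: cvg_id|move=> v; exact: derivable_id].
apply/SmS; split.
  move=> vs; rewrite leqn0 => /nilP -> x _ /=.
  by split; [exact: cvg_id|move=> v; exact: derivable_id].
move=> v; have -> : (fun x => 'D_v id x) = fun _ : 'rV[R]_k => v.
  by apply: funext => x; rewrite derive_id.
exact: Sm_cst.
Qed.

End Comp.

Section AnaAx.
Variable R : realType.
Local Notation E n := 'rV[R]_n.

Lemma smooth_on_cst k a (U : set (E k)) (c : E a) : smooth_on R U (fun _ => c).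
Proof. exact: smooth_on_cst'. Qed.
Lemma smooth_on_id k (U : set (E k)) : smooth_on R U id.
Proof. exact: smooth_on_id'. Qed.
Lemma smooth_on_comp k n a (V : set (E k)) (U : set (E n)) (F : E k -> E n)
  (G : E n -> E a) : open U -> open V -> (forall y, V y -> U (F y)) ->
  smooth_on R V F -> smooth_on R U G -> smooth_on R V (G \o F).
Proof. exact: smooth_on_comp'. Qed.
Lemma smooth_on_cont k n (V : set (E k)) (f : E k -> E n) x :
  smooth_on R V f -> V x -> {for x, continuous f}.
Proof. by move=> sf Vx; have [] := sf [::] x Vx. Qed.
End AnaAx.

Section DiffPart.
Variable R : realType.
Local Notation E n := 'rV[R]_n.

Lemma sig_eq {A : Type} {P : A -> Prop} (x : A) (p q : P x) :
  exist P x p = exist P x q.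
Proof. by rewrite (Prop_irrelevance p q). Qed.

Definition coarse (Z : Type) : plot_set R Z := fun n U _ => open U.

Lemma coarse_diff Z : is_diffeology R (coarse Z).
Proof.
split; first by [].
split; first by [].
split; first by move=> n k U V P F hF oV.
by move=> n U P oU.
Qed.

Lemma dsmooth_coarse {A Z : Type} (DA : plot_set R A) (f : A -> Z) :
  (forall n U P, DA n U P -> open U) -> dsmooth R DA (coarse Z) f.
Proof. by move=> H n U P /H. Qed.

Lemma sub_diff {Y : Type} (DY : plot_set R Y) (A : set Y) :
  is_diffeology R DY -> is_diffeology R (sub_diffeology R DY A).
Proof.
move=> [Ho [Hc [Hcomp Hloc]]]; split; first by move=> n U P /Ho.
split; first by move=> n U x oU; exact: Hc.
split; first by move=> n k U V P F hF oV hP sF; exact: (Hcomp _ _ _ _ _ _ hF oV hP sF).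
move=> n U P oU H; apply: Hloc oU _ => x Ux.
have [V [oV [Vx [hVU hV]]]] := H x Ux.
by exists V; split=> //; split=> //; exists hVU.
Qed.

Lemma open_preimage k n (V : set (E k)) (F : E k -> E n) (W : set (E n)) :
  open V -> (forall x, V x -> {for x, continuous F}) -> open W ->
  open [set z | V z /\ W (F z)].
Proof.
move=> oV cF oW; rewrite openE => z [Vz WFz].
have nV : nbhs z V by move: oV; rewrite openE => /(_ z Vz).
have nW : nbhs (F z) W by move: oW; rewrite openE => /(_ _ WFz).
have nFW : nbhs z (F @^-1` W) by exact: (cF z Vz _ nW).
by apply: filterS (filterI nV nFW) => y [].
Qed.

Lemma smooth_on_sub k n (V V' : set (E k)) (f : E k -> E n) :
  (forall x, V' x -> V x) -> smooth_on R V f -> smooth_on R V' f.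
Proof. by move=> sub sf vs x /sub; exact: sf. Qed.

Section Pushout.
Variables (A B C P : Type) (DA : plot_set R A) (DB : plot_set R B)
  (DC : plot_set R C) (DP : plot_set R P) (i : A -> B -> Prop)
  (h : A -> C) (k : C -> P) (g : B -> P).
Hypothesis po : is_pushout R DA DB DC DP i h k g.
Hypothesis oB : forall n U Q, DB n U Q -> open U.
Hypothesis oC : forall n U Q, DC n U Q -> open U.
Hypothesis oP : forall n U Q, DP n U Q -> open U.

Lemma po_surj p : (exists c, k c = p) \/ (exists b, g b = p).
Proof.
case: po => _ [_ [compat univ]].
have [u [su [uk [ug uniq]]]] := univ Prop (coarse Prop) (coarse_diff _)
  (fun _ => True) (fun _ => True) (dsmooth_coarse _ _ oC) (dsmooth_coarse _ _ oB)
  (fun _ _ _ => erefl).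
pose u1 := fun p => (exists c, k c = p) \/ (exists b, g b = p).
have e1 := uniq u1 (dsmooth_coarse _ _ oP).
have e2 := uniq (fun _ => True) (dsmooth_coarse _ _ oP) (fun _ => erefl) (fun _ => erefl).
have e3 : u1 p = u p.
  apply: e1.
  - by move=> c; apply/propext; split=> // _; left; exists c.
  - by move=> b; apply/propext; split=> // _; right; exists b.
by rewrite /u1 in e3; rewrite e3 -e2.
Qed.

Lemma po_SB c b : k c = g b -> exists a, i a b.
Proof.
case: po => _ [_ [compat univ]] e.
have [u [su [uk [ug uniq]]]] := univ Prop (coarse Prop) (coarse_diff _)
  (fun _ => True) (fun b => exists a, i a b) (dsmooth_coarse _ _ oC) (dsmooth_coarse _ _ oB)
  (fun a b iab => propext (conj (fun _ => ex_intro _ a iab) (fun _ => I))).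
by have := ug b; rewrite -e uk => <-.
Qed.

Lemma po_cross c b : k c = g b -> exists a, h a = c.
Proof.
move=> e; have SB := @po_SB c b e.
case: po => _ [_ [compat univ]].
have [u [su [uk [ug uniq]]]] := univ Prop (coarse Prop) (coarse_diff _)
  (fun c => exists a, h a = c) (fun b => exists a, i a b)
  (dsmooth_coarse _ _ oC) (dsmooth_coarse _ _ oB)
  (fun a b iab => propext (conj (fun _ => ex_intro _ a iab)
                                (fun _ => ex_intro _ a erefl))).
by have := ug b; rewrite -e uk => ->.
Qed.

Lemma po_inj b1 b2 : g b1 = g b2 -> (exists a, i a b1) \/ b1 = b2.
Proof.
move=> e; case: po => _ [_ [compat univ]].
pose f2 := fun b => if pselect (exists a, i a b) then None else Some b.
have c2 : forall a b, i a b -> (fun _ => None) (h a) = f2 b.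
  by move=> a b iab; rewrite /f2; case: pselect => // -[]; exists a.
have [u [su [uk [ug uniq]]]] := univ (option B) (coarse _) (coarse_diff _)
  (fun _ => None) f2 (dsmooth_coarse _ _ oC) (dsmooth_coarse _ _ oB) c2.
move: (ug b1); rewrite e ug /f2.
case: (pselect (exists a, i a b1)) => [H1 _|H1]; first by left.
by case: (pselect (exists a, i a b2)) => [H2|H2] // [->]; right.
Qed.

End Pushout.
Arguments po_inj {A B C P DA DB DC DP i h k g}.
Arguments po_surj {A B C P DA DB DC DP i h k g}.
Arguments po_SB {A B C P DA DB DC DP i h k g}.
Arguments po_cross {A B C P DA DB DC DP i h k g}.

Lemma sphere_disk a b (p : E a * E b) : fat_sphere R a b p -> fat_disk R a b p.
Proof.
rewrite /fat_sphere /fat_disk /= => h1; apply: le_trans h1.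
by rewrite gerBl phi_ge0.
Qed.
Arguments sphere_disk {a b p}.

Section CW.
Variables (X : Type) (DX : plot_set R X)
  (skel : nat -> set X) (skel_sub : forall n x, skel n x -> skel n.+1 x)
  (J : nat -> Type) (m : forall n, J n -> nat)
  (h : forall n, cells_S R n (m n) -> {x | prevskel X skel n x})
  (hhat : forall n, cells_D R n (m n) -> {x | skel n x}).
Variable n : nat.
Local Notation DS := (cells_S_diffeology R n (m n)).
Local Notation DD := (cells_D_diffeology R n (m n)).
Local Notation DC := (prevskel_diffeology R X DX skel n).
Local Notation DP := (skel_diffeology R X DX skel n).
Local Notation kk := (skel_incl X skel skel_sub n).
Local Notation g := (hhat n).
Local Notation hh := (h n).
Local Notation Sn := (cells_S R n (m n)).
Local Notation Dn := (cells_D R n (m n)).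
Local Notation incl := (@incl_SD R n (J n) (m n)).

Hypothesis HDX : is_diffeology R DX.
Hypothesis Hpo : is_pushout R DS DD DC DP incl hh kk g.
Hypothesis Hind : induction R DS DC hh.
Hypothesis Hopen : D_open R DC (range hh).

Lemma oDD k U Q : DD k U Q -> open U. Proof. by case. Qed.
Lemma oDC k U Q : DC k U Q -> open U. Proof. by case: HDX => Ho _ /Ho. Qed.
Lemma oDP k U Q : DP k U Q -> open U. Proof. by case: HDX => Ho _ /Ho. Qed.

Lemma DD_cst k (U : set (E k)) b : open U -> DD k U (fun _ => b).
Proof.
move=> oU; split=> // x; case: b => j [p hp].
exists U; split=> //; split; first exact: (proj2_sig x).
exists (fun y hy => hy), j, (fun _ => exist _ p hp); split => //.
split=> //; exists (fun _ => p.1), (fun _ => p.2).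
split; first exact: smooth_on_cst.
split; first exact: smooth_on_cst.
by move=> _; exact: surjective_pairing.
Qed.

Lemma DD_comp k k' (U : set (E k)) (V : set (E k')) (L : {x | U x} -> Dn)
  (F : E k' -> E k) (hF : forall y, V y -> U (F y)) :
  open V -> DD k U L -> smooth_on R V F ->
  DD k' V (fun y => L (exist _ (F (proj1_sig y)) (hF _ (proj2_sig y)))).
Proof.
move=> oV [oU HL] sF; split=> // y.
have [W [oW [WFy [hWU [j [Q [[_ [G1 [G2 [s1 [s2 eQ]]]]] eqL]]]]]]] :=
  HL (exist _ (F (proj1_sig y)) (hF _ (proj2_sig y))).
pose V' := [set z | V z /\ W (F z)].
have oV' : open V'.
  by apply: open_preimage => // x Vx; exact: smooth_on_cont sF Vx.
have sF' : smooth_on R V' F by apply: smooth_on_sub sF => x [].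
exists V'; split=> //; split; first by split; [exact: (proj2_sig y)|exact: WFy].
exists (fun z hz => proj1 hz), j,
  (fun z => Q (exist _ (F (proj1_sig z)) (proj2 (proj2_sig z)))).
split.
  split=> //; exists (G1 \o F), (G2 \o F).
  split; first by apply: smooth_on_comp s1 => // z [].
  split; first by apply: smooth_on_comp s2 => // z [].
  by move=> z; rewrite eQ.
move=> z /=; rewrite -eqL /=; congr L; exact: sig_eq.
Qed.

Definition toD (s : Sn) : Dn := existT _ (projT1 s)
  (exist _ (proj1_sig (projT2 s)) (sphere_disk (proj2_sig (projT2 s)))).

Lemma incl_toD s : incl s (toD s).
Proof. by case: s => j [p hp]; exists j, p, hp, (sphere_disk hp). Qed.

Lemma incl_toD_eq a b : incl a b -> b = toD a.
Proof.
move=> [j [p [hS [hD [-> ->]]]]]; rewrite /toD /=.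
by congr existT; exact: sig_eq.
Qed.

Lemma toD_smooth : dsmooth R DS DD toD.
Proof.
move=> k U Q [oU HQ]; split=> // x.
have [W [oW [Wx [hWU [j [Q' [DQ' eq']]]]]]] := HQ x.
exists W; split=> //; split=> //; exists hWU, j,
  (fun y => exist _ (proj1_sig (Q' y)) (sphere_disk (proj2_sig (Q' y)))).
split; first exact: DQ'.
by move=> y; rewrite /toD eq'.
Qed.

Lemma kk_inj : injective kk.
Proof.
move=> [x1 p1] [x2 p2] /(f_equal (@proj1_sig _ _)) /= e.
by subst; exact: sig_eq.
Qed.

Lemma po_compat a b : incl a b -> kk (hh a) = g b.
Proof. by case: Hpo => _ [_ [c _]]; exact: c. Qed.

Lemma g_inj : injective g.
Proof.
have oDS : forall k U Q, DS k U Q -> open U by move=> ? ? ? [].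
move=> b1 b2 e.
have [[a1 i1]|//] := po_inj Hpo oDD oDC _ _ e.
have [[a2 i2]|e'] := po_inj Hpo oDD oDC _ _ (esym e); last by [].
have e1 := @po_compat a1 b1 i1; have e2 := @po_compat a2 b2 i2.
move: i1 i2 => /incl_toD_eq e1' /incl_toD_eq e2'.
suff : a1 = a2 by move=> a12; rewrite e1' e2' a12.
case: Hind => hinj _; apply: hinj; apply: kk_inj.
by rewrite e1 e2.
Qed.

Lemma sig_eq2 {A : Type} {P : A -> Prop} (x y : A) (p : P x) (q : P y) :
  x = y -> exist P x p = exist P y q.
Proof. by move=> e; subst; exact: sig_eq. Qed.

Definition Zl : plot_set R {x | skel n x} := fun k U Q =>
  DP k U Q /\
  forall x (hx : U x), range g (Q (exist _ x hx)) ->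
    exists V : set (E k), open V /\ V x /\
      exists hVU : (forall y, V y -> U y),
      exists L : {y | V y} -> Dn, DD k V L /\
        forall y : {y | V y}, g (L y) = Q (exist _ (proj1_sig y) (hVU _ (proj2_sig y))).

Lemma Zl_diff : is_diffeology R Zl.
Proof.
have [Ho [Hc [Hcomp Hloc]]] := sub_diff DX (skel n) HDX.
split; first by move=> k U Q [/Ho].
split.
  move=> k U p oU; split; first exact: Hc.
  move=> x hx [b _ eb].
  exists U; split=> //; split=> //; exists (fun y hy => hy), (fun _ => b).
  by split; first exact: DD_cst.
split.
  move=> k k' U V Q F hF oV [DQ HQ] sF; split; first exact: (Hcomp _ _ _ _ _ _ hF oV DQ sF).
  move=> y hy [b _ eb].
  have [W [oW [Wx [hWU [L [DL eL]]]]]] := HQ (F y) (hF y hy) (ex_intro2 _ _ b I eb).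
  pose V' := [set z | V z /\ W (F z)].
  have oV' : open V'.
    by apply: open_preimage => // x Vx; exact: smooth_on_cont sF Vx.
  have sF' : smooth_on R V' F by apply: smooth_on_sub sF => x [].
  exists V'; split=> //; split; first by [].
  exists (fun z hz => proj1 hz).
  exists (fun z => L (exist _ (F (proj1_sig z)) (proj2 (proj2_sig z)))).
  split; first exact: (@DD_comp _ _ W V' L F (fun z hz => proj2 hz) oV' DL sF').
  by move=> z /=; rewrite eL /=; congr Q; exact: sig_eq.
move=> k U Q oU H; split.
  apply: Hloc oU _ => x Ux; have [V [oV [Vx [hVU [DV _]]]]] := H x Ux.
  by exists V; split=> //; split=> //; exists hVU; exact: DV.
move=> x hx rx.
have [V [oV [Vx [hVU [_ HV]]]]] := H x hx.
have rx' : range g (Q (exist _ x (hVU x Vx))) by rewrite (sig_eq _ (hVU x Vx) hx).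
have [W [oW [Wx [hWV [L [DL eL]]]]]] := HV x Vx rx'.
exists W; split=> //; split=> //; exists (fun y hy => hVU y (hWV y hy)), L.
by split=> // y; rewrite eL.
Qed.

Lemma Zl_k : dsmooth R DC Zl kk.
Proof.
move=> k U Q DQ; split; first by case: Hpo => [sk _]; exact: sk.
move=> x hx [b _ eb].
have [a ea] := po_cross Hpo oDD oDC _ _ (esym eb).
pose W := [set y | exists hy : U y, range hh (Q (exist _ y hy))].
have oW : open W := Hopen _ _ _ DQ.
have hWU : forall y, W y -> U y by move=> y [].
have Wr : forall y (wy : W y), range hh (Q (exist _ y (hWU y wy))).
  by move=> y wy; have [hy r] := wy; rewrite (sig_eq _ (hWU y wy) hy).
pose QW := fun y : {y | W y} => exist (range hh)
  (Q (exist _ (proj1_sig y) (hWU _ (proj2_sig y)))) (Wr _ (proj2_sig y)).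
have DQW : sub_diffeology R DC (range hh) k W QW.
  have [_ [_ [Hcomp _]]] := sub_diff DX (prevskel X skel n) HDX.
  have := (Hcomp _ _ U W Q id hWU oW DQ (smooth_on_id _ _ _)).
  rewrite /sub_diffeology /QW /=.
  move=> H; exact: H.
case: Hind => _ [_ [_ [ginv [sginv [c1 c2]]]]].
exists W; split=> //; split; first by exists hx; exists a.
exists hWU, (fun y => toD (ginv (QW y))); split.
  by apply: toD_smooth; exact: sginv _ _ _ DQW.
move=> y; rewrite -(@po_compat _ _ (incl_toD _)).
by have := f_equal (@proj1_sig _ _) (c2 (QW y)); rewrite /= => ->.
Qed.

Lemma Zl_g : dsmooth R DD Zl g.
Proof.
move=> k U Q DQ; split; first by case: Hpo => _ [sg _]; exact: sg.
move=> x hx _; exists U; split; first exact: oDD _ _ _ DQ.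
split=> //; exists (fun y hy => hy), Q; split=> //.
by case.
Qed.

Lemma lift k U Q : DP k U Q -> Zl k U Q.
Proof.
case: Hpo => sk [sg [compat univ]].
have [u [su [uk [ug _]]]] := univ _ Zl Zl_diff kk g Zl_k Zl_g compat.
have uid : forall p, u p = p.
  move=> p; case: (po_surj Hpo oDD oDC oDP p) => [[c <-]|[b <-]].
    by rewrite uk.
  by rewrite ug.
move=> DQ; have := su _ _ _ DQ.
have -> : (fun x => u (Q x)) = Q by apply: funext => x; rewrite uid.
by [].
Qed.

Lemma g_Dopen : D_open R DP (range g).
Proof.
move=> k U Q DQ; have [_ HL] := lift _ _ _ DQ.
rewrite openE => x [hx rx].
have [V [oV [Vx [hVU [L [_ eL]]]]]] := HL x hx rx.
have nV : nbhs x V by move: oV; rewrite openE => /(_ x Vx).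
apply: filterS nV => y Vy; exists (hVU y Vy).
by exists (L (exist _ y Vy)) => //; rewrite eL.
Qed.

Lemma g_induction : induction R DD DP g.
Proof.
split; first exact: g_inj.
have sg : dsmooth R DD DP g by case: Hpo => _ [].
split=> //; split; first by move=> k U Q DQ; exact: sg.
pose Ginv := fun q : {p | range g p} => s2val (cid2 (proj2_sig q)).
have eG : forall q, g (Ginv q) = proj1_sig q.
  by move=> q; exact: (s2valP' (cid2 (proj2_sig q))).
exists Ginv; split.
  move=> k U Q DQ; have [_ HL] := lift _ _ _ DQ.
  split; first exact: oDP _ _ _ DQ.
  move=> [x hx].
  have rx : range g (proj1_sig (Q (exist _ x hx))) := proj2_sig _.
  have [V [oV [Vx [hVU [L [DL eL]]]]]] := HL x hx rx.
  case: DL => _ /(_ (exist _ x Vx)) [W [oW [Wx [hWV [j [Q' [DQ' eQ']]]]]]].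
  exists W; split=> //; split=> //.
  exists (fun y hy => hVU y (hWV y hy)), j, Q'; split=> // y.
  apply: g_inj; rewrite eG -(eQ' y) eL /=.
  by [].
split.
  by move=> b; apply: g_inj; rewrite eG.
by move=> [p r]; rewrite /corestr; apply: sig_eq2; exact: (eG (exist _ p r)).
Qed.

End CW.
End DiffPart.

End Prop72Helpers.
Import Prop72Helpers.

Theorem proposition7p2
  (X : Type) (DX : plot_set Rdefinitions.R X)
  (skel : nat -> set X) (skel_sub : forall n x, skel n x -> skel n.+1 x)
  (J : nat -> Type) (m : forall n, J n -> nat)
  (h : forall n, cells_S Rdefinitions.R n (m n) -> {x | prevskel X skel n x})
  (hhat : forall n, cells_D Rdefinitions.R n (m n) -> {x | skel n x}) :
  is_regular_CW Rdefinitions.R X DX skel skel_sub J m h hhat ->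
  forall n : nat,
    induction Rdefinitions.R (cells_D_diffeology Rdefinitions.R n (m n))
              (skel_diffeology Rdefinitions.R X DX skel n) (hhat n) /\
    D_open Rdefinitions.R (skel_diffeology Rdefinitions.R X DX skel n)
           (range (hhat n)).
Proof.
move=> [[HDX [Hh [Hpo Hcol]]] Hreg] n.
have [Hind Hop] := Hreg n.
split.
  exact: (Prop72Helpers.g_induction _ _ _ _ _ _ _ _ _ _ HDX (Hpo n) Hind Hop).
exact: (Prop72Helpers.g_Dopen _ _ _ _ _ _ _ _ _ _ HDX (Hpo n) Hind Hop).
Qed.
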